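(* Consider the four-stage implicit Runge–Kutta method with Butcher tableau $(\mathbf c,\mathbf A,\mathbf b)$ given by \[ \begin{array}{c|cccc} 0 & 0 & 0 & 0 & 0 \\ \frac 1 3 & \frac{47}{360} & \frac{89}{360} & -\frac{19}{360} & \frac{3}{360} \\ \frac 2 3 & \frac{21}{180} & \frac{77}{180} & \frac{23}{180} & -\frac{1}{180} \\ 1 & \frac 1 8 & \frac 3 8 & \frac 3 8 & \frac 1 8 \\ \hline & \frac 1 8 & \frac 3 8 & \frac 3 8 & \frac 1 8 \end{array} \] This method is stiffly accurate and has explicit first line; it is A-stable; its order of convergence is $p=4$; and its stage order is $\tilde q=3$.
   Context: An $s$-stage Runge–Kutta method with Butcher tableau $\mathbf c=(c_i)$, $\mathbf A=(a_{i,j})$, $\mathbf b=(b_i)$ applied to the initial value problem $y'(x)=f(x,y(x))$, $y(a)=y_a$, with step size $h$ and grid $x_n=a+nh$, computes $y_{n+1}=y_n+h\sum_{i=1}^s b_iK_i$, where $K_i=f\big(x_n+hc_i,\ y_n+h\sum_{j=1}^s a_{i,j}K_j\big)$, $i=1,\dots,s$. The method has order $p$ if its local truncation error is $\mathcal O(h^{p+1})$ (equivalently, all Butcher order conditions up to order $p$ hold). The method has explicit first line if $a_{1,1}=\dots=a_{1,s}=0$, and is stiffly accurate if $a_{s,i}=b_i$ for all $i=1,\dots,s$. Its stability function is $R(z)=\det(\mathbf I-z\mathbf A+z\mathbf e\mathbf b^T)/\det(\mathbf I-z\mathbf A)$ (with $\mathbf I$ the identity matrix and $\mathbf e$ the vector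 of ones), i.e. applying the method to $y'=\lambda y$ gives $y_{n+1}=R(h\lambda)y_n$; the method is A-stable if its stability domain $\{z\in\mathbb C:|R(z)|\le 1\}$ contains the left half-plane $\{z:\mathrm{Re}(z)\le 0\}$. Simplifying conditions: $B(p)$: $\sum_{i=1}^s b_ic_i^{k-1}=1/k$ for $k=1,\dots,p$; $C(q)$: $\sum_{j=1}^s a_{i,j}c_j^{k-1}=c_i^k/k$ for $k=1,\dots,q$, $i=1,\dots,s$. The stage order is the maximal integer $\tilde q$ such that $B(p)$ and $C(q)$ hold for $p=1,\dots,\tilde q$ and $q=1,\dots,\tilde q$. *)

(* Defs.v *)
From HB Require Import structures.
From mathcomp Require Import all_boot all_order all_algebra.
Set Implicit Arguments. Unset Strict Implicit. Unset Printing Implicit Defensive.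
Import Order.TTheory GRing.Theory Num.Theory.
Local Open Scope ring_scope.

Section RK.
Variables (F : fieldType) (s : nat).
Variables (c : 'I_s -> F) (A : 'M[F]_s) (b : 'I_s -> F).

Definition explicit_first_line : Prop :=
  forall k j : 'I_s, nat_of_ord k = 0%N -> A k j = 0.

Definition stiffly_accurate : Prop :=
  forall k i : 'I_s, nat_of_ord k = s.-1 -> A k i = b i.

Definition condB (p : nat) : Prop :=
  forall k : nat, (1 <= k <= p)%N -> \sum_(i < s) b i * c i ^+ k.-1 = k%:R^-1.

Definition condC (q : nat) : Prop :=
  forall k : nat, (1 <= k <= q)%N ->
    forall i : 'I_s, \sum_(j < s) A i j * c j ^+ k.-1 = c i ^+ k / k%:R.

Definition has_stage_order (q : nat) : Prop :=
  (forall k, (k <= q)%N -> condB k /\ condC k) /\ ~ (condB q.+1 /\ condC q.+1).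

End RK.

Inductive rtree : Type := Node of seq rtree.

Fixpoint rt_order (t : rtree) : nat :=
  match t with
  | Node ts => (fix sumo l := match l with [::] => 1%N | u :: l' => (rt_order u + sumo l')%N end) ts
  end.

Fixpoint rt_gamma (t : rtree) : nat :=
  match t with
  | Node ts => (rt_order (Node ts) *
      (fix prodg l := match l with [::] => 1%N | u :: l' => (rt_gamma u * prodg l')%N end) ts)%N
  end.

Section OrderConds.
Variables (F : fieldType) (s : nat) (A : 'M[F]_s) (b : 'I_s -> F).

Fixpoint rt_psi (t : rtree) (i : 'I_s) : F :=
  match t with
  | Node ts => (fix prodl l := match l with
                 | [::] => 1
                 | u :: l' => (\sum_(j < s) A i j * rt_psi u j) * prodl l'
                 end) ts
  end.

Definition rt_phi (t : rtree) : F := \sum_(i < s) b i * rt_psi t i.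

Definition order_conditions (p : nat) : Prop :=
  forall t : rtree, (rt_order t <= p)%N -> rt_phi t = (rt_gamma t)%:R^-1.

Definition has_order (p : nat) : Prop :=
  order_conditions p /\ ~ order_conditions p.+1.
End OrderConds.

Section Stability.
Variables (C : numClosedFieldType) (s : nat) (A : 'M[C]_s) (b : 'I_s -> C).

Definition stab_num (z : C) : C :=
  \det (1%:M - z *: A + z *: (const_mx 1 *m \row_i b i) : 'M[C]_s).
Definition stab_den (z : C) : C := \det (1%:M - z *: A : 'M[C]_s).
Definition stab_fun (z : C) : C := stab_num z / stab_den z.

Definition stab_domain (z : C) : Prop := stab_den z != 0 /\ `|stab_fun z| <= 1.

Definition A_stable : Prop := forall z : C, 'Re z <= 0 -> stab_domain z.
End Stability.

Definition rk4_c : 'I_4 -> rat :=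
  fun i => nth 0 [:: 0; 1/3; 2/3; 1] i.
Definition rk4_A : 'M[rat]_4 :=
  \matrix_(i < 4, j < 4) nth 0 (nth [::] [::
     [:: 0; 0; 0; 0];
     [:: 47/360; 89/360; -19/360; 3/360];
     [:: 21/180; 77/180; 23/180; -1/180];
     [:: 1/8; 3/8; 3/8; 1/8]] i) j.
Definition rk4_b : 'I_4 -> rat :=
  fun i => nth 0 [:: 1/8; 3/8; 3/8; 1/8] i.

(* Main.v *)
Require Import Defs.
From HB Require Import structures.
From mathcomp Require Import all_boot all_order all_algebra.
From mathcomp Require Import zify ring lra.
Import Order.TTheory GRing.Theory Num.Theory.
Local Open Scope ring_scope.

Definition DET4 {R : comNzRingType} (f : nat -> nat -> R) : R :=
  0 + (f 0%N 0%N * f 1%N 1%N * f 2%N 2%N * f 3%N 3%N)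
  - (f 0%N 0%N * f 1%N 1%N * f 2%N 3%N * f 3%N 2%N)
  - (f 0%N 0%N * f 1%N 2%N * f 2%N 1%N * f 3%N 3%N)
  + (f 0%N 0%N * f 1%N 2%N * f 2%N 3%N * f 3%N 1%N)
  + (f 0%N 0%N * f 1%N 3%N * f 2%N 1%N * f 3%N 2%N)
  - (f 0%N 0%N * f 1%N 3%N * f 2%N 2%N * f 3%N 1%N)
  - (f 0%N 1%N * f 1%N 0%N * f 2%N 2%N * f 3%N 3%N)
  + (f 0%N 1%N * f 1%N 0%N * f 2%N 3%N * f 3%N 2%N)
  + (f 0%N 1%N * f 1%N 2%N * f 2%N 0%N * f 3%N 3%N)
  - (f 0%N 1%N * f 1%N 2%N * f 2%N 3%N * f 3%N 0%N)
  - (f 0%N 1%N * f 1%N 3%N * f 2%N 0%N * f 3%N 2%N)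
  + (f 0%N 1%N * f 1%N 3%N * f 2%N 2%N * f 3%N 0%N)
  + (f 0%N 2%N * f 1%N 0%N * f 2%N 1%N * f 3%N 3%N)
  - (f 0%N 2%N * f 1%N 0%N * f 2%N 3%N * f 3%N 1%N)
  - (f 0%N 2%N * f 1%N 1%N * f 2%N 0%N * f 3%N 3%N)
  + (f 0%N 2%N * f 1%N 1%N * f 2%N 3%N * f 3%N 0%N)
  + (f 0%N 2%N * f 1%N 3%N * f 2%N 0%N * f 3%N 1%N)
  - (f 0%N 2%N * f 1%N 3%N * f 2%N 1%N * f 3%N 0%N)
  - (f 0%N 3%N * f 1%N 0%N * f 2%N 1%N * f 3%N 2%N)
  + (f 0%N 3%N * f 1%N 0%N * f 2%N 2%N * f 3%N 1%N)
  + (f 0%N 3%N * f 1%N 1%N * f 2%N 0%N * f 3%N 2%N)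
  - (f 0%N 3%N * f 1%N 1%N * f 2%N 2%N * f 3%N 0%N)
  - (f 0%N 3%N * f 1%N 2%N * f 2%N 0%N * f 3%N 1%N)
  + (f 0%N 3%N * f 1%N 2%N * f 2%N 1%N * f 3%N 0%N).
Lemma det4 (R : comNzRingType) (f : nat -> nat -> R) : \det (\matrix_(i < 4, j < 4) f i j) = DET4 f.
Proof.
rewrite (expand_det_row _ ord0) !big_ord_recl big_ord0 /cofactor.
rewrite !(expand_det_row _ ord0) !big_ord_recl !big_ord0 /cofactor.
rewrite !(expand_det_row _ ord0) !big_ord_recl !big_ord0 /cofactor !det_mx11.
rewrite !mxE /bump /= /DET4.
ring.
Qed.


Definition Ppade {C : fieldType} (z : C) : C :=
  1 + z / 2%:R + z ^+ 2 / 10%:R + z ^+ 3 / 120%:R.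

Definition aC {C : fieldType} (i j : nat) : C :=
  match i, j with
  | S (O), O => 47%:R / 360%:R | S (O), S (O) => 89%:R / 360%:R | S (O), S (S (O)) => - (19%:R / 360%:R) | S (O), S (S (S (O))) => 3%:R / 360%:R
  | S (S (O)), O => 21%:R / 180%:R | S (S (O)), S (O) => 77%:R / 180%:R | S (S (O)), S (S (O)) => 23%:R / 180%:R | S (S (O)), S (S (S (O))) => - (1 / 180%:R)
  | S (S (S (O))), O => 1 / 8%:R | S (S (S (O))), S (O) => 3%:R / 8%:R | S (S (S (O))), S (S (O)) => 3%:R / 8%:R | S (S (S (O))), S (S (S (O))) => 1 / 8%:R
  | _, _ => 0 end.
Definition bC {C : fieldType} (j : nat) : C :=
  match j with
  | O => 1 / 8%:R | S (O) => 3%:R / 8%:R | S (S (O)) => 3%:R / 8%:R | _ => 1 / 8%:R end.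

Section RL.
Variable C : numClosedFieldType.
Lemma rL1 (n m : nat) : ratr (n%:R / m%:R : rat) = n%:R / m%:R :> C.
Proof. by rewrite rmorphM fmorphV !rmorph_nat. Qed.
Lemma rL2 (n m : nat) : ratr (- n%:R / m%:R : rat) = - (n%:R / m%:R) :> C.
Proof. by rewrite rmorphM fmorphV rmorphN !rmorph_nat mulNr. Qed.
Lemma rL3 (m : nat) : ratr (1 / m%:R : rat) = 1 / m%:R :> C.
Proof. by rewrite rmorphM fmorphV rmorph1 !rmorph_nat. Qed.
Lemma rL5 (m : nat) : ratr (- 1 / m%:R : rat) = - (1 / m%:R) :> C.
Proof. by rewrite rmorphM fmorphV rmorphN rmorph1 !rmorph_nat mulNr. Qed.
Lemma rL4 : ratr (0 : rat) = 0 :> C.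
Proof. by rewrite rmorph0. Qed.
End RL.

Lemma ratrA (C : numClosedFieldType) (i j : 'I_4) : ratr (rk4_A i j) = aC (C:=C) i j.
Proof.
rewrite mxE. case: i j => [[|[|[|[|i]]]] Hi] [[|[|[|[|j]]]] Hj];
  try (exfalso; move: Hi; apply/negP; by []); try (exfalso; move: Hj; apply/negP; by []).
all: cbn [nth nat_of_ord aC].
1-4: exact: rL4.
1-2: exact: rL1.
1: exact: rL2.
1-4: exact: rL1.
1: exact: rL5.
1: exact: rL3.
1-2: exact: rL1.
1: exact: rL3.
Qed.

Lemma ratrb (C : numClosedFieldType) (j : 'I_4) : ratr (rk4_b j) = bC (C:=C) j.
Proof.
case: j => [[|[|[|[|j]]]] Hj]; try (exfalso; move: Hj; apply/negP; by []).
all: rewrite /rk4_b; cbn [nth nat_of_ord bC].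
exact: rL3. exact: rL1. exact: rL1. exact: rL3.
Qed.

Lemma ratrA' (C : numClosedFieldType) (i j : 'I_4) : (map_mx (ratr : rat -> C) rk4_A) i j = aC i j.
Proof. rewrite mxE; exact: ratrA. Qed.

Lemma num_eq (C : numClosedFieldType) (z : C) :
  stab_num (map_mx (ratr : rat -> C) rk4_A) (fun i => ratr (rk4_b i)) z = Ppade z.
Proof.
rewrite /stab_num.
pose f := (fun i j : nat => (nat_of_bool (eqn i j))%:R - z * aC i j + z * bC j).
have -> : (1%:M - z *: map_mx ratr rk4_A + z *: (const_mx 1 *m \row_i ratr (rk4_b i))
   : 'M[C]_4) = \matrix_(i<4,j<4) f i j.
  move: (map_mx ratr rk4_A) (ratrA' C) => M hM.
  apply/matrixP => i j; rewrite !mxE big_ord1 !mxE !mul1r hM ratrb.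
  by case: i j => [i Hi] [j Hj].
rewrite (det4 _ f) /DET4 /f /aC /bC /=.
rewrite /Ppade.
by field.
Qed.

Lemma den_eq (C : numClosedFieldType) (z : C) :
  stab_den (map_mx (ratr : rat -> C) rk4_A) z = Ppade (- z).
Proof.
rewrite /stab_den.
pose f := (fun i j : nat => (nat_of_bool (eqn i j))%:R - z * aC i j).
have -> : (1%:M - z *: map_mx ratr rk4_A : 'M[C]_4) = \matrix_(i<4,j<4) f i j.
  move: (map_mx ratr rk4_A) (ratrA' C) => M hM.
  apply/matrixP => i j; rewrite !mxE hM.
  by case: i j => [i Hi] [j Hj].
rewrite (det4 _ f) /DET4 /f /aC /bC /=.
rewrite /Ppade.
by field.
Qed.

Lemma Pconj (C : numClosedFieldType) (z : C) : (Ppade z)^* = Ppade z^*.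
Proof.
by rewrite /Ppade !(rmorphD, rmorphM, rmorphXn, fmorphV, rmorph_nat, rmorph1).
Qed.

Lemma Astab (C : numClosedFieldType) :
  A_stable (map_mx (ratr : rat -> C) rk4_A) (fun i => ratr (rk4_b i)).
Proof.
move=> z Hz; rewrite /stab_domain /stab_fun num_eq den_eq.
set w := z^*.
have hw : (- z)^* = - w by rewrite rmorphN.
set s := z + w.
have hs : s <= 0.
  have -> : s = 'Re z * 2%:R by rewrite ReE /s /w mulfVK // pnatr_eq0.
  by rewrite mulr_le0_ge0 // ler0n.
have hr : 0 <= z * w by exact: mul_conjC_ge0.
have hs2 : 0 <= s ^+ 2 by apply: real_exprn_even_ge0 => //; exact: ler0_real.
pose Q := 1 + ((3%:R * (z * w) + s ^+ 2) / 60%:R + (z * w) ^+ 2 / 600%:R).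
have hQ : 0 < Q.
  rewrite /Q ltr_wpDr ?ltr01 //.
  by rewrite addr_ge0 // divr_ge0 ?ler0n ?exprn_ge0 // addr_ge0 // mulr_ge0 // ler0n.
have key : Ppade z * Ppade w - Ppade (- z) * Ppade (- w) = s * Q.
  by rewrite /Ppade /Q /s; field.
have hle : `|Ppade z| ^+ 2 <= `|Ppade (- z)| ^+ 2.
  rewrite !normCK !Pconj -/w hw -subr_le0 key.
  by apply: mulr_le0_ge0 => //; exact: ltW.
have hle1 : `|Ppade z| <= `|Ppade (- z)|.
  by rewrite -ler_sqr // qualifE /= normr_ge0.
have hD : Ppade (- z) != 0.
  apply/negP => /eqP h0.
  have h1 : Ppade z = 0.
    apply/eqP; rewrite -normr_eq0 -sqrf_eq0 eq_le exprn_ge0 // andbT.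
    by move: hle; rewrite h0 normr0 expr0n.
  have e1 : z ^+ 2 = - 10%:R.
    apply/eqP; rewrite -subr_eq0; apply/eqP.
    have -> : z ^+ 2 - - 10%:R = (Ppade z + Ppade (- z)) * 5%:R by rewrite /Ppade; field.
    by rewrite h1 h0 addr0 mul0r.
  have e2 : z = 0.
    have : z * 5%:R / 6%:R = 0.
      have -> : z * 5%:R / 6%:R = (Ppade z - Ppade (- z)) - z * (z ^+ 2 + 10%:R) / 60%:R.
        by rewrite /Ppade; field.
      by rewrite h1 h0 e1 addNr mulr0 mul0r !subr0.
    by move/eqP; rewrite !mulf_eq0 invr_eq0 !pnatr_eq0 /= !orbF => /eqP.
  move: e1; rewrite e2 expr0n /= => /eqP; rewrite eq_sym oppr_eq0 pnatr_eq0.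
  by [].
split => //.
rewrite normf_div ler_pdivrMr ?mul1r // normr_gt0 //.
Qed.


Lemma rt_orderE ts : rt_order (Node ts) = (sumn (map rt_order ts)).+1.
Proof. elim: ts => [|u ts IH] //=; rewrite /= in IH; by rewrite IH addnS. Qed.

Lemma rt_gammaE ts : rt_gamma (Node ts) = (rt_order (Node ts) * foldr muln 1 (map rt_gamma ts))%N.
Proof.
congr (_ * _)%N; elim: ts => [|u ts IH] //=; rewrite /= in IH; by rewrite IH.
Qed.

Lemma rt_psiE (F : fieldType) (s : nat) (A : 'M[F]_s) ts i :
  rt_psi A (Node ts) i = foldr (fun u acc => (\sum_(j < s) A i j * rt_psi A u j) * acc) 1 ts.
Proof. elim: ts => [|u ts IH] //=; rewrite /= in IH; by rewrite IH. Qed.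

Lemma rt_order_gt0 t : (0 < rt_order t)%N.
Proof. by case: t => ts; rewrite rt_orderE. Qed.

Lemma rtree_sind (P : rtree -> Prop) :
  (forall ts, (forall u, List.In u ts -> P u) -> P (Node ts)) -> forall t, P t.
Proof.
move=> H t; move: {2}(rt_order t) (leqnn (rt_order t)) => n; elim: n t => [|n IH] t.
  by move: (rt_order_gt0 t); case: (rt_order t).
case: t => ts Hts; apply: H => u Hu; apply: IH.
move: Hts; rewrite rt_orderE ltnS; apply: leq_trans.
elim: ts Hu => [|v ts IHts] //= [->|Hu]; first exact: leq_addr.
by rewrite (leq_trans (IHts Hu)) // leq_addl.
Qed.

Lemma rt_gamma_gt0 t : (0 < rt_gamma t)%N.
Proof.
elim/rtree_sind: t => ts IH; rewrite rt_gammaE muln_gt0 rt_order_gt0 /=.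
elim: ts IH => [|u ts IHts] IH //=.
rewrite muln_gt0 IH /=; last by left.
by apply: IHts => v Hv; apply: IH; right.
Qed.

Lemma child_lt u ts : List.In u ts -> (rt_order u < rt_order (Node ts))%N.
Proof.
rewrite rt_orderE ltnS.
elim: ts => [|v ts IHts] //= [->|Hu]; first exact: leq_addr.
by rewrite (leq_trans (IHts Hu)) // leq_addl.
Qed.



Lemma sum4 (R : nmodType) (F : 'I_4 -> R) :
  \sum_(i < 4) F i = F (Ordinal (isT : (0 < 4)%N)) + F (Ordinal (isT : (1 < 4)%N))
    + F (Ordinal (isT : (2 < 4)%N)) + F (Ordinal (isT : (3 < 4)%N)).
Proof.
rewrite !big_ord_recl big_ord0 addr0 !addrA.
by congr (F _ + F _ + F _ + F _); apply: val_inj.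
Qed.

Lemma condC3 : condC rk4_c rk4_A 3.
Proof.
move=> k /andP[hk1 hk3] i.
case: k hk1 hk3 => [|[|[|[|k]]]] hk1 hk3; try (exfalso; move: hk1; apply/negP; by []);
  try (exfalso; move: hk3; apply/negP; by []).
all: case: i => [[|[|[|[|i]]]] Hi]; try (exfalso; move: Hi; apply/negP; by []).
all: rewrite sum4 !mxE; cbn [nth nat_of_ord rk4_c predn].
all: by field.
Qed.

Lemma condB4 : condB rk4_c rk4_b 4.
Proof.
move=> k /andP[hk1 hk3].
case: k hk1 hk3 => [|[|[|[|[|k]]]]] hk1 hk3; try (exfalso; move: hk1; apply/negP; by []);
  try (exfalso; move: hk3; apply/negP; by []).
all: rewrite sum4; cbn [nth nat_of_ord rk4_c rk4_b predn].
all: by field.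
Qed.

Lemma notC4 : ~ condC rk4_c rk4_A 4.
Proof.
move=> hC; move: (hC 4%N isT (Ordinal (isT : (1 < 4)%N))).
rewrite sum4 !mxE; cbn [nth nat_of_ord rk4_c predn].
move/eqP; rewrite -subr_eq0; set X := (_ - _) => /eqP hX.
have : X * (- 810%:R) = 1 by rewrite /X; field.
by rewrite hX mul0r => /eqP; rewrite eq_sym oner_eq0.
Qed.


Lemma fold_eq ts (i : 'I_4) :
  (forall u, List.In u ts -> forall j, rt_psi rk4_A u j =
      rk4_c j ^+ (rt_order u).-1 * (rt_order u)%:R / (rt_gamma u)%:R) ->
  (forall u, List.In u ts -> (rt_order u <= 3)%N) ->
  foldr (fun u acc => (\sum_(j < 4) rk4_A i j * rt_psi rk4_A u j) * acc) 1 ts =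
  rk4_c i ^+ (sumn (map rt_order ts)) / (foldr muln 1 (map rt_gamma ts))%:R.
Proof.
elim: ts => [|u ts IHts] H1 H2 /=; first by rewrite expr0 divr1.
rewrite IHts; last (by move=> v Hv; apply: H2; right); last (by move=> v Hv; apply: H1; right).
have -> : \sum_(j < 4) rk4_A i j * rt_psi rk4_A u j =
   (\sum_(j < 4) rk4_A i j * rk4_c j ^+ (rt_order u).-1) * ((rt_order u)%:R / (rt_gamma u)%:R).
  rewrite big_distrl; apply: eq_bigr => j _; rewrite H1; last by left.
  by rewrite /= !mulrA.
have hu := H2 u (or_introl erefl).
have hu0 := rt_order_gt0 u.
rewrite (condC3 (rt_order u)); last by rewrite hu0 hu.
rewrite exprD natrM invfM.
have hk : (rt_order u)%:R != 0 :> rat by rewrite pnatr_eq0 -lt0n.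
by rewrite [X in X * _ = _]mulrA divfK // mulrACA.
Qed.

Lemma psi_formula t : (rt_order t <= 4)%N -> forall i,
  rt_psi rk4_A t i = rk4_c i ^+ (rt_order t).-1 * (rt_order t)%:R / (rt_gamma t)%:R.
Proof.
elim/rtree_sind: t => ts IH Hord i.
rewrite rt_psiE fold_eq; first last.
- by move=> u Hu; rewrite -ltnS (leq_trans (child_lt _ _ Hu)).
- by move=> u Hu; apply: IH => //; rewrite (leq_trans (ltnW (child_lt _ _ Hu))).
rewrite rt_gammaE natrM invfM rt_orderE /=.
have hk : (sumn (map rt_order ts)).+1%:R != 0 :> rat by rewrite pnatr_eq0.
by rewrite [RHS]mulrA mulfK.
Qed.

Lemma order4 : order_conditions rk4_A rk4_b 4.
Proof.
move=> t Ht; rewrite /rt_phi.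
under eq_bigr => i _ do rewrite psi_formula //.
have -> : \sum_(i < 4) rk4_b i * (rk4_c i ^+ (rt_order t).-1 * (rt_order t)%:R / (rt_gamma t)%:R)
  = (\sum_(i < 4) rk4_b i * rk4_c i ^+ (rt_order t).-1) * ((rt_order t)%:R / (rt_gamma t)%:R).
  by rewrite big_distrl; apply: eq_bigr => i _; rewrite /= !mulrA.
have h0 := rt_order_gt0 t.
rewrite (condB4 (rt_order t)); last by rewrite h0 Ht.
have hk : (rt_order t)%:R != 0 :> rat by rewrite pnatr_eq0 -lt0n.
by rewrite mulrA mulVf // mul1r.
Qed.


Lemma rowsum (i : 'I_4) : \sum_(j < 4) rk4_A i j * 1 = rk4_c i.
Proof.
have := condC3 1%N isT i.
under eq_bigr => j _ do rewrite expr0.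
by rewrite expr1 divr1.
Qed.

Lemma not_order5 : ~ order_conditions rk4_A rk4_b 5.
Proof.
pose l := Node [::].
move=> /(_ (Node [:: l; l; l; l]) isT).
have -> : rt_gamma (Node [:: l; l; l; l]) = 5%N by [].
rewrite /rt_phi.
have H4 : forall i, rt_psi rk4_A (Node [:: l; l; l; l]) i = rk4_c i ^+ 4.
  move=> i; rewrite /l; cbn [rt_psi]; rewrite rowsum.
  by rewrite mulr1 !exprS expr0 mulr1.
under eq_bigr => i _ do rewrite H4.
rewrite sum4; cbn [nth nat_of_ord rk4_c rk4_b].
move/eqP; rewrite -subr_eq0; set X := (_ - _) => /eqP hX.
have : X * 270%:R = 1 :> rat by rewrite /X; field.
by rewrite hX mul0r => /eqP; rewrite eq_sym oner_eq0.
Qed.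


Lemma stiff : stiffly_accurate rk4_A rk4_b.
Proof.
move=> k i; rewrite mxE; case: k => [k Hk] /= ->.
case: i => [[|[|[|[|i]]]] Hi]; try (exfalso; move: Hi; apply/negP; by []); cbn [nth nat_of_ord rk4_b]; reflexivity.
Qed.

Lemma efl : explicit_first_line rk4_A.
Proof.
move=> k j; rewrite mxE; case: k => [k Hk] /= ->.
case: j => [[|[|[|[|j]]]] Hj]; try (exfalso; move: Hj; apply/negP; by []); cbn [nth nat_of_ord]; reflexivity.
Qed.

Lemma stage3 : has_stage_order rk4_c rk4_A rk4_b 3.
Proof.
split.
  move=> k hk; split.
    move=> m /andP[h1 h2]; apply: condB4; rewrite h1 /=.
    exact: (leq_trans h2 (leq_trans hk (isT : (3 <= 4)%N))).
  move=> m /andP[h1 h2]; apply: condC3; rewrite h1 /=.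
  exact: (leq_trans h2 hk).
by move=> [_ hC]; apply: notC4.
Qed.

Theorem theorem3p1 :
  stiffly_accurate rk4_A rk4_b /\
  explicit_first_line rk4_A /\
  (forall C : numClosedFieldType,
     A_stable (map_mx (ratr : rat -> C) rk4_A) (fun i => ratr (rk4_b i))) /\
  has_order rk4_A rk4_b 4 /\
  has_stage_order rk4_c rk4_A rk4_b 3.
Proof.
split; first exact: stiff.
split; first exact: efl.
split; first exact: Astab.
split; last exact: stage3.
split; [exact: order4 | exact: not_order5].
Qed.
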